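(* The class $\{X\in 2^\omega: X \text{ is recursively traceable}\}$ has Hausdorff dimension $0$.
   Context: Fix a recursive canonical enumeration $n\mapsto D_n$ of all finite subsets of $\omega$ (with each $D_n$ uniformly recursive). A set $A\in 2^\omega$ is recursively traceable if there is a computable function $b$ (a bound) such that for every function $f\le_T A$ there is a computable function $g$ with $|D_{g(n)}|\le b(n)$ and $f(n)\in D_{g(n)}$ for all $n\in\omega$. Hausdorff dimension is the classical Hausdorff dimension on Cantor space. *)

(* Defs.v *)
From HB Require Import structures.
From mathcomp Require Import all_boot all_order all_algebra.
From mathcomp Require Import all_classical all_reals all_analysis.
Set Implicit Arguments. Unset Strict Implicit. Unset Printing Implicit Defensive.
Import Order.TTheory GRing.Theory Num.Theory.

(* Oracle partial recursive functions (mu-recursive functions with an  *)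
(* oracle primitive).  Programs are untyped; a program of the wrong    *)
(* arity still denotes a partial recursive function (missing arguments *)
(* default to 0), so the class of functions is the standard one.       *)
Inductive prog : Type :=
| PZero : prog
| PSucc : prog
| PProj : nat -> prog
| POrac : prog
| PComp : prog -> seq prog -> prog
| PPrec : prog -> prog -> prog
| PMu   : prog -> prog.

Inductive eval (A : nat -> bool) : prog -> seq nat -> nat -> Prop :=
| evZero xs : eval A PZero xs 0
| evSucc xs : eval A PSucc xs (head 0%N xs).+1
| evProj i xs : eval A (PProj i) xs (nth 0%N xs i)
| evOrac xs : eval A POrac xs (nat_of_bool (A (head 0%N xs)))
| evComp f gs xs ys y :
    evals A gs xs ys -> eval A f ys y -> eval A (PComp f gs) xs y
| evPrec0 f g xs y : eval A f xs y -> eval A (PPrec f g) (0%N :: xs) y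
| evPrecS f g n xs z y :
    eval A (PPrec f g) (n :: xs) z -> eval A g (n :: z :: xs) y ->
    eval A (PPrec f g) (n.+1 :: xs) y
| evMu f xs y :
    eval A f (y :: xs) 0 ->
    (forall z, (z < y)%N -> exists2 v, v <> 0%N & eval A f (z :: xs) v) ->
    eval A (PMu f) xs y
with evals (A : nat -> bool) : seq prog -> seq nat -> seq nat -> Prop :=
| evsNil xs : evals A [::] xs [::]
| evsCons g gs xs y ys :
    eval A g xs y -> evals A gs xs ys -> evals A (g :: gs) xs (y :: ys).

Definition computes (A : nat -> bool) (p : prog) (f : nat -> nat) : Prop :=
  forall n, eval A p [:: n] (f n).

Definition turing_le (f : nat -> nat) (A : nat -> bool) : Prop :=
  exists p, computes A p f.

Definition computable (f : nat -> nat) : Prop :=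
  exists p, computes (fun _ => false) p f.

(* Canonical enumeration of finite sets: D_k = { i | bit i of k is 1 } *)
Definition D (k : nat) : seq nat := [seq i <- iota 0 k | odd (k %/ 2 ^ i)].

Definition recursively_traceable (A : nat -> bool) : Prop :=
  exists b, computable b /\
    forall f, turing_le f A ->
      exists g, computable g /\
        forall n, (size (D (g n)) <= b n)%N /\ f n \in D (g n).

(* Hausdorff dimension on Cantor space 2^omega (standard metric        *)
(* d(X,Y) = 2^{-min{i | X i <> Y i}}), via covers by basic cylinders.  *)
Local Open Scope classical_set_scope.
Local Open Scope ring_scope.

Definition cylinder (s : seq bool) : set (nat -> bool) :=
  [set X | forall i, (i < size s)%N -> X i = nth false s i].

Definition covers (E : set (nat -> bool)) (U : nat -> option (seq bool)) :=
  E `<=` \bigcup_i (if U i is Some s then cylinder s else set0).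

Definition cover_weight (R : realType) (t : R) (u : option (seq bool)) : \bar R :=
  if u is Some s then (powR (2 : R) (- (t * (size s)%:R)))%:E else 0%E.

(* H^t_n(E): infimum over covers by cylinders of length >= n (diam <= 2^-n) *)
Definition hausdorff_approx (R : realType) (t : R) (n : nat)
    (E : set (nat -> bool)) : \bar R :=
  ereal_inf [set (\sum_(i <oo) cover_weight t (U i))%E | U in
     [set U | covers E U /\
        forall i s, U i = Some s -> (n <= size s)%N]].

(* H^t(E) = lim_{n -> oo} H^t_n(E) = sup_n H^t_n(E) (nondecreasing in n) *)
Definition hausdorff_measure (R : realType) (t : R) (E : set (nat -> bool))
  : \bar R := ereal_sup (range (fun n => hausdorff_approx t n E)).

Definition hausdorff_dim (R : realType) (E : set (nat -> bool)) : \bar R :=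
  ereal_inf [set t%:E | t in [set t : R | 0 <= t /\ hausdorff_measure t E = 0%E]].

(* Main.v *)
Require Import Defs.
From mathcomp Require Import all_boot all_order all_algebra.
From mathcomp Require Import all_classical all_reals all_analysis.
From mathcomp Require Import zify.
Set Implicit Arguments. Unset Strict Implicit. Unset Printing Implicit Defensive.
Notation eval := Defs.eval.
Notation evals := Defs.evals.

Definition eval_ind' (A : nat -> bool)
  (P : prog -> seq nat -> nat -> Prop) (Q : seq prog -> seq nat -> seq nat -> Prop)
  (HZ : forall xs, P PZero xs 0)
  (HS : forall xs, P PSucc xs (head 0%N xs).+1)
  (HP : forall i xs, P (PProj i) xs (nth 0%N xs i))
  (HO : forall xs, P POrac xs (nat_of_bool (A (head 0%N xs))))
  (HC : forall f gs xs ys y, evals A gs xs ys -> Q gs xs ys -> eval A f ys y -> P f ys y -> P (PComp f gs) xs y)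
  (HP0 : forall f g xs y, eval A f xs y -> P f xs y -> P (PPrec f g) (0%N::xs) y)
  (HPS : forall f g n xs z y, eval A (PPrec f g) (n::xs) z -> P (PPrec f g) (n::xs) z ->
      eval A g (n::z::xs) y -> P g (n::z::xs) y -> P (PPrec f g) (n.+1::xs) y)
  (HM : forall f xs y, eval A f (y::xs) 0 -> P f (y::xs) 0 ->
      (forall z, (z < y)%N -> exists2 v, v <> 0%N & (eval A f (z::xs) v /\ P f (z::xs) v)) ->
      P (PMu f) xs y)
  (HN : forall xs, Q [::] xs [::])
  (HCo : forall g gs xs y ys, eval A g xs y -> P g xs y -> evals A gs xs ys -> Q gs xs ys -> Q (g::gs) xs (y::ys)) :
  forall p xs y, eval A p xs y -> P p xs y :=
  fix F p xs y (e : eval A p xs y) {struct e} : P p xs y :=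
    match e in eval _ p xs y return P p xs y with
    | evZero xs => HZ xs
    | evSucc xs => HS xs
    | evProj i xs => HP i xs
    | evOrac xs => HO xs
    | evComp f gs xs ys y es ef => HC f gs xs ys y es (G _ _ _ es) ef (F _ _ _ ef)
    | evPrec0 f g xs y ef => HP0 f g xs y ef (F _ _ _ ef)
    | evPrecS f g n xs z y e1 e2 => HPS f g n xs z y e1 (F _ _ _ e1) e2 (F _ _ _ e2)
    | evMu f xs y e0 H => HM f xs y e0 (F _ _ _ e0)
        (fun z hz => match H z hz with ex_intro2 v hv ev => ex_intro2 _ _ v hv (conj ev (F _ _ _ ev)) end)
    end
  with G gs xs ys (e : evals A gs xs ys) {struct e} : Q gs xs ys :=
    match e in evals _ gs xs ys return Q gs xs ys with
    | evsNil xs => HN xs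
    | evsCons g gs xs y ys e1 e2 => HCo g gs xs y ys e1 (F _ _ _ e1) e2 (G _ _ _ e2)
    end
  for F.

Lemma eval_det A p xs y : eval A p xs y -> forall y', eval A p xs y' -> y = y'.
Proof.
move=> e; pattern p, xs, y; apply: (@eval_ind' A _
  (fun gs xs ys => forall ys', evals A gs xs ys' -> ys = ys')) e.
- by move=> xs0 y' H; inversion H.
- by move=> xs0 y' H; inversion H.
- by move=> i xs0 y' H; inversion H.
- by move=> xs0 y' H; inversion H.
- move=> f gs xs0 ys y0 _ IHs _ IHf y' H; inversion H; subst.
  match goal with Hs : evals _ gs _ _ |- _ => have E := IHs _ Hs end; subst; exact: IHf.
- move=> f g xs0 y0 _ IHf y' H; inversion H; subst; exact: IHf.
- move=> f g n xs0 z y0 _ IH1 _ IH2 y' H; inversion H; subst.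
  match goal with Hs : eval _ (PPrec f g) _ _ |- _ => have E := IH1 _ Hs end; subst; exact: IH2.
- move=> f xs0 y0 _ IH0 Hlt y' H; inversion H; subst.
  case: (ltngtP y0 y') => Hc //.
  + match goal with H2 : forall z, _ -> exists2 v, _ & _ |- _ => have [v hv ev] := H2 _ Hc end.
    have E := IH0 _ ev; by case: hv; rewrite -E.
  + have [v hv [ev IHv]] := Hlt _ Hc.
    match goal with H1 : eval _ f _ 0 |- _ => have E := IHv _ H1 end.
    by case: hv.
- by move=> xs0 ys' H; inversion H.
- move=> g gs xs0 y0 ys _ IHg _ IHs ys' H; inversion H; subst.
  match goal with H3 : eval _ g _ _, H5 : evals _ gs _ _ |- _ => by rewrite (IHg _ H3) (IHs _ H5) end.
Qed.

Fixpoint strip (p : prog) : prog :=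
  match p with
  | POrac => PZero
  | PComp f gs => PComp (strip f) (map strip gs)
  | PPrec f g => PPrec (strip f) (strip g)
  | PMu f => PMu (strip f)
  | q => q
  end.

Lemma strip_eval A p xs y : eval (fun _ => false) p xs y -> eval A (strip p) xs y.
Proof.
move=> e; pattern p, xs, y; apply: (@eval_ind' (fun _ => false) _
  (fun gs xs ys => evals A (map strip gs) xs ys)) e.
- by move=> ?; constructor.
- by move=> ?; constructor.
- by move=> ? ?; constructor.
- by move=> ?; constructor.
- by move=> f gs xs0 ys y0 _ IHs _ IHf /=; econstructor; eauto.
- by move=> f g xs0 y0 _ IHf /=; constructor.
- by move=> f g n xs0 z y0 _ IH1 _ IH2 /=; econstructor; eauto.
- move=> f xs0 y0 _ IH0 Hlt /=; constructor => // z hz.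
  by have [v hv [_ ev]] := Hlt _ hz; exists v.
- by move=> ?; constructor.
- by move=> g gs xs0 y0 ys _ IHg _ IHs /=; constructor.
Qed.

Definition addp := PPrec (PProj 0) (PComp PSucc [:: PProj 1]).
Definition mulp := PPrec PZero (PComp addp [:: PProj 2; PProj 1]).
Definition sp := PPrec PZero (PComp addp [:: PProj 1; PComp addp [:: PProj 1; POrac]]).

Lemma eval_add A n m : eval A addp [:: n; m] (n + m).
Proof.
elim: n => [|n IH]; first by apply: evPrec0; apply: (evProj A 0 [:: m]).
apply: (evPrecS IH).
apply: (@evComp _ _ _ _ [:: n + m]); first by apply: evsCons; [apply: (evProj A 1 [:: n; n + m; m])|constructor].
exact: (evSucc A [:: n + m]).
Qed.

Lemma eval_mul A n m : eval A mulp [:: n; m] (n * m).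
Proof.
elim: n => [|n IH]; first by apply: evPrec0; constructor.
apply: (evPrecS IH).
apply: (@evComp _ _ _ _ [:: m; n * m]).
  apply: evsCons; first exact: (evProj A 2 [:: n; n * m; m]).
  apply: evsCons; [exact: (evProj A 1 [:: n; n * m; m])|constructor].
exact: eval_add.
Qed.

Fixpoint codeX (X : nat -> bool) (k : nat) : nat :=
  if k is k'.+1 then codeX X k' + (codeX X k' + X k') else 0.

Lemma eval_sp X k : eval X sp [:: k] (codeX X k).
Proof.
elim: k => [|k IH]; first by apply: evPrec0; constructor.
apply: (evPrecS IH) => /=.
apply: (@evComp _ _ _ _ [:: codeX X k; codeX X k + X k]); last exact: eval_add.
apply: evsCons; first exact: (evProj X 1 [:: k; codeX X k]).
apply: evsCons; last constructor.
apply: (@evComp _ _ _ _ [:: codeX X k; nat_of_bool (X k)]); last exact: eval_add.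
apply: evsCons; first exact: (evProj X 1 [:: k; codeX X k]).
apply: evsCons; [exact: (evOrac X [:: k; codeX X k])|constructor].
Qed.

Definition hfun (b : nat -> nat) (n : nat) := n * ((b n).+1 * (b n).+1).
Definition bbp pb := PComp PSucc [:: strip pb].
Definition hp pb := PComp mulp [:: PProj 0; PComp mulp [:: bbp pb; bbp pb]].
Definition fprog pb := PComp sp [:: hp pb].

Lemma eval_fprog X pb b : computes (fun _ => false) pb b ->
  computes X (fprog pb) (fun n => codeX X (hfun b n)).
Proof.
move=> Hb n.
have Hbb : eval X (bbp pb) [:: n] (b n).+1.
  apply: (@evComp _ _ _ _ [:: b n]); last exact: (evSucc X [:: b n]).
  by apply: evsCons; [exact: strip_eval|constructor].
apply: (@evComp _ _ _ _ [:: hfun b n]); last exact: eval_sp.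
apply: evsCons; last constructor.
apply: (@evComp _ _ _ _ [:: n; (b n).+1 * (b n).+1]); last exact: eval_mul.
apply: evsCons; first exact: (evProj X 0 [:: n]).
apply: evsCons; last constructor.
apply: (@evComp _ _ _ _ [:: (b n).+1; (b n).+1]); last exact: eval_mul.
by apply: evsCons => //; apply: evsCons => //; constructor.
Qed.


Lemma codeX_split X m j :
  codeX X (m + j) = codeX X m * 2 ^ j + codeX (fun i => X (m + i)) j.
Proof.
elim: j => [|j IH]; first by rewrite addn0 expn0 muln1 addn0.
rewrite addnS /= IH expnS; lia.
Qed.

Lemma codeX_lt X j : codeX X j < 2 ^ j.
Proof.
elim: j => [|j IH] //=; rewrite expnS; case: (X j) => /=; lia.
Qed.

Definition decodeStr (c h : nat) : seq bool :=
  [seq odd (c %/ 2 ^ (h.-1 - i)) | i <- iota 0 h].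

Lemma decodeStr_size c h : size (decodeStr c h) = h.
Proof. by rewrite size_map size_iota. Qed.

Lemma decodeStr_ok X h : cylinder (decodeStr (codeX X h) h) X.
Proof.
move=> i; rewrite decodeStr_size => hi.
rewrite /decodeStr (nth_map 0%N) ?size_iota // nth_iota // add0n.
have [j ->] : exists j, h = i.+1 + j by exists (h - i.+1); lia.
have -> : (i.+1 + j).-1 - i = j by lia.
rewrite codeX_split divnMDl ?expn_gt0 // divn_small ?codeX_lt // addn0.
by rewrite /= !oddD addbA addbb /= oddb.
Qed.

Fixpoint allP (P : prog -> Prop) (gs : seq prog) : Prop :=
  if gs is g :: gs' then P g /\ allP P gs' else True.

Definition prog_ind' (P : prog -> Prop)
  (HZ : P PZero) (HS : P PSucc) (HP : forall i, P (PProj i)) (HO : P POrac)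
  (HC : forall f gs, P f -> allP P gs -> P (PComp f gs))
  (HR : forall f g, P f -> P g -> P (PPrec f g))
  (HM : forall f, P f -> P (PMu f)) : forall p, P p :=
  fix F p := match p return P p with
  | PZero => HZ | PSucc => HS | PProj i => HP i | POrac => HO
  | PComp f gs => HC f gs (F f)
      ((fix G gs : allP P gs := match gs return allP P gs with
         | [::] => I | g :: gs' => conj (F g) (G gs') end) gs)
  | PPrec f g => HR f g (F f) (F g)
  | PMu f => HM f (F f)
  end.

Fixpoint enc (p : prog) : GenTree.tree nat :=
  match p with
  | PZero => GenTree.Node 0 [::]
  | PSucc => GenTree.Node 1 [::]
  | PProj i => GenTree.Leaf i
  | POrac => GenTree.Node 3 [::]
  | PComp f gs => GenTree.Node 4 (enc f :: map enc gs)
  | PPrec f g => GenTree.Node 5 [:: enc f; enc g]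
  | PMu f => GenTree.Node 6 [:: enc f]
  end.

Fixpoint dec (t : GenTree.tree nat) : prog :=
  match t with
  | GenTree.Leaf i => PProj i
  | GenTree.Node 1 _ => PSucc
  | GenTree.Node 3 _ => POrac
  | GenTree.Node 4 (t1 :: ts) => PComp (dec t1) (map dec ts)
  | GenTree.Node 5 [:: t1; t2] => PPrec (dec t1) (dec t2)
  | GenTree.Node 6 [:: t1] => PMu (dec t1)
  | _ => PZero
  end.

Lemma encK : cancel enc dec.
Proof.
apply: prog_ind' => //=.
- move=> f gs -> H; congr PComp; elim: gs H => //= g gs IH [-> /IH ->] //.
- by move=> f g -> ->.
- by move=> f ->.
Qed.

Definition dp (j : nat) : prog * prog :=
  match unpickle j with
  | Some (tb, tg) => (dec tb, dec tg)
  | None => (PZero, PZero)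
  end.

Lemma dpP pb pg : dp (pickle (enc pb, enc pg)) = (pb, pg).
Proof. by rewrite /dp pickleK !encK. Qed.
Import Order.TTheory GRing.Theory Num.Theory.

Definition pr (j k : nat) : nat := ((j + k) ^ 2 + k)%N.

Lemma pr_inj j k j' k' : pr j k = pr j' k' -> j = j' /\ k = k'.
Proof.
rewrite /pr => E.
have Hs : (j + k = j' + k')%N.
  case: (ltngtP (j + k) (j' + k')) => // H; exfalso.
  - have : ((j + k).+1 ^ 2 <= (j' + k') ^ 2)%N by rewrite leq_exp2r.
    rewrite -!mulnn in E *; nia.
  - have : ((j' + k').+1 ^ 2 <= (j + k) ^ 2)%N by rewrite leq_exp2r.
    rewrite -!mulnn in E *; nia.
rewrite Hs in E; lia.
Qed.

Definition csel (p : prog) : nat -> nat :=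
  match pselect (exists b, computes (fun _ => false) p b) with
  | left H => proj1_sig (cid H)
  | right _ => fun _ => 0%N
  end.

Lemma cselP p b : computes (fun _ => false) p b -> csel p = b.
Proof.
move=> Hb; rewrite /csel; case: pselect => [H|H]; last by exfalso; apply: H; exists b.
case: (cid H) => b' Hb' /=; apply/funext => n; exact: eval_det (Hb' n) _ (Hb n).
Qed.

Definition n0 (N c q j : nat) : nat := (N + q.+1 * (c + j.+1 ^ 2))%N.

Definition entry (N c q j k : nat) : option (seq bool) :=
  let b := csel (dp j).1 in let g := csel (dp j).2 in
  let n := n0 N c q j in let L := D (g n) in
  if (k < size L)%N && (k < b n)%N then Some (decodeStr (nth 0%N L k) (hfun b n)) else None.

Definition Ucov (N c q : nat) (i : nat) : option (seq bool) :=
  match pselect (exists jk : nat * nat, pr jk.1 jk.2 = i) with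
  | left H => let jk := proj1_sig (cid H) in entry N c q jk.1 jk.2
  | right _ => None
  end.

Lemma Ucov_pr N c q j k : Ucov N c q (pr j k) = entry N c q j k.
Proof.
rewrite /Ucov; case: pselect => [H|H]; last by exfalso; apply: H; exists (j, k).
case: (cid H) => [[j' k']] /= /pr_inj [-> ->] //.
Qed.

Lemma Ucov_covers N c q : covers [set X | recursively_traceable X] (Ucov N c q).
Proof.
move=> X [b [[pb Hpb] Htr]].
have [g [[pg Hpg] Hg]] := Htr _ (ex_intro _ (fprog pb) (eval_fprog X Hpb)).
set j := pickle (enc pb, enc pg).
set n := n0 N c q j.
set L := D (g n).
have [Hsz Hin] := Hg n.
exists (pr j (index (codeX X (hfun b n)) L)) => //.
rewrite Ucov_pr /entry /j dpP /= (cselP Hpb) (cselP Hpg) -/n -/L.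
rewrite index_mem Hin /= (leq_trans _ Hsz) ?index_mem //.
by rewrite nth_index //; apply: decodeStr_ok.
Qed.

Lemma Ucov_len N c q i s : Ucov N c q i = Some s -> (N <= size s)%N.
Proof.
rewrite /Ucov; case: pselect => // H; rewrite /entry.
case: ifP => // _ [<-]; rewrite decodeStr_size /hfun /n0.
set m := ((csel _ _).+1 * _)%N.
have : (0 < m)%N by rewrite muln_gt0.
nia.
Qed.

Lemma Ucov_wt N c q i s : Ucov N c q i = Some s -> (q.+1 * (c + i.+1) <= size s)%N.
Proof.
rewrite /Ucov; case: pselect => // H; case: (cid H) => [[j k]] /= <-.
rewrite /entry; case: ifP => // /andP[_]; set B := csel (dp j).1; set n := n0 _ _ _ _.
move=> hk [<-]; rewrite decodeStr_size /hfun -/B -/n.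
have h1 : (pr j k).+1 <= (j.+1 ^ 2 * ((B n).+1 * (B n).+1))%N.
  rewrite /pr -!mulnn.
  have h2 : ((j + k).+1 <= j.+1 * (B n).+1)%N by nia.
  have h3 : ((j + k) * (j + k) + k).+1 <= (j + k).+1 * (j + k).+1 by nia.
  apply: (leq_trans h3); apply: (leq_trans (leq_mul h2 h2)); nia.
have h4 : (q.+1 * (c + j.+1 ^ 2) <= n)%N by rewrite /n /n0 leq_addl.
apply: (@leq_trans (q.+1 * (c + j.+1 ^ 2) * ((B n).+1 * (B n).+1))); last by rewrite leq_mul2r h4 orbT.
rewrite -mulnA leq_mul2l /= mulnDl; apply: leq_add; last exact: h1.
by rewrite leq_pmulr // muln_gt0.
Qed.

Local Open Scope ring_scope.
Local Open Scope classical_set_scope.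

Definition tq (R : realType) (q : nat) : R := (q.+1%:R)^-1.

Lemma weight_le (R : realType) q c i s :
  (q.+1 * (c + i.+1) <= size s)%N ->
  (cover_weight (tq R q) (Some s) <= (((2:R) ^+ c)^-1 / (2 ^ i.+1)%:R)%:E)%E.
Proof.
move=> H; rewrite /cover_weight lee_fin powRN natrX -invfM -exprD.
have p1 : 0 < (2:R) ^+ (c + i.+1) by rewrite exprn_gt0.
rewrite lef_pV2 ?posrE ?powR_gt0 //.
rewrite -powR_mulrn //; apply: ler_powR; first by rewrite ler1n.
have -> : ((c + i.+1)%:R : R) = tq R q * (q.+1 * (c + i.+1))%:R.
  by rewrite natrM mulrA /tq mulVf ?mul1r // pnatr_eq0.
by rewrite ler_wpM2l ?invr_ge0 ?ler0n // ler_nat.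
Qed.

Definition Eset := [set X | recursively_traceable X].

Lemma cw_ge0 (R : realType) (t : R) u : (0 <= cover_weight t u)%E.
Proof. by case: u => //= s; rewrite lee_fin powR_ge0. Qed.

Lemma HN_le (R : realType) q N c :
  (hausdorff_approx (tq R q) N Eset <= (((2:R) ^+ c)^-1)%:E)%E.
Proof.
apply: (@le_trans _ _ (\sum_(i <oo) cover_weight (tq R q) (Ucov N c q i))%E).
  apply: ereal_inf_lbound; exists (Ucov N c q) => //; split.
    exact: Ucov_covers.
  by move=> i s; apply: Ucov_len.
apply: le_trans (epsilon_trick0 xpredT _); last by rewrite invr_ge0 exprn_ge0.
apply: lee_nneseries => [i _ _|i _]; first exact: cw_ge0.
case E: (Ucov N c q i) => [s|]; first exact: weight_le (Ucov_wt E).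
by rewrite /cover_weight lee_fin divr_ge0 ?invr_ge0 ?exprn_ge0 ?ler0n.
Qed.

Lemma small_le0 (R : realType) (x : \bar R) :
  (forall c, (x <= (((2:R) ^+ c)^-1)%:E)%E) -> (x <= 0)%E.
Proof.
move=> H; apply/lee_addgt0Pr => e e0; rewrite add0e.
apply: le_trans (H (Num.Def.archi_bound e^-1)) _; rewrite lee_fin.
have h := upper_nthrootP (leqnn (Num.Def.archi_bound e^-1)).
rewrite invf_ple ?posrE ?exprn_gt0 //; exact: ltW.
Qed.

Lemma H_zero (R : realType) q : hausdorff_measure (tq R q) Eset = 0%E.
Proof.
apply/le_anti/andP; split.
  apply: ge_ereal_sup => _ [N _ <-]; apply: small_le0 => c; exact: HN_le.
apply: le_trans (ereal_sup_ubound (ex_intro2 _ _ 0%N I erefl)).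
apply: le_ereal_inf_tmp => _ [U _ <-]; apply: nneseries_ge0 => n _ _; exact: cw_ge0.
Qed.

Theorem mainTheorem4 (R : realType) :
  hausdorff_dim R [set X | recursively_traceable X] = 0%E.
Proof.
apply/le_anti/andP; split; last first.
  by apply: le_ereal_inf_tmp => _ [t [t0 _] <-]; rewrite lee_fin.
apply/lee_addgt0Pr => e e0; rewrite add0e.
set q := Num.Def.archi_bound e^-1.
apply: (@le_trans _ _ (tq R q)%:E).
  apply: ereal_inf_lbound; exists (tq R q) => //; split; last exact: H_zero.
  by rewrite /tq invr_ge0 ler0n.
rewrite lee_fin /tq invf_ple ?posrE ?ltr0n //.
have h : e^-1 < q%:R by apply: archi_boundP; rewrite invr_ge0 ltW.
by apply: ltW; apply: lt_le_trans h _; rewrite ler_nat.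
Qed.
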